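(* Let $A$ and $B$ be probabilistic models, let $\phi:A\to B$ be an embedding, and let $\psi:B\to A$ be a morphism with $\psi\circ\phi=\mathrm{id}_{A}$ (the identity on $X(A)$). Then $\psi$ is test-preserving, i.e. $\psi(F)\in\mathcal{M}(A)$ for every $F\in\mathcal{M}(B)$.
   Context: A test space is a collection $\mathcal{M}$ of nonempty sets (''tests'') that is irredundant ($E,F\in\mathcal{M}$, $E\subseteq F$ imply $E=F$); $X=\bigcup\mathcal{M}$ is its outcome set. A probability weight is a function $\alpha:X\to[0,1]$ with $\sum_{x\in E}\alpha(x)=1$ for all $E\in\mathcal{M}$. A probabilistic model $A$ is a pair $(\mathcal{M}(A),\Omega(A))$ with $\mathcal{M}(A)$ a test space with outcome set $X(A)$ and $\Omega(A)$ a set of probability weights (states); standing assumptions: $\Omega(A)$ is convex, closed under uniform limits, and positive (for every $x\in X(A)$ there is $\alpha\in\Omega(A)$ with $\alpha(x)>0$). An event is a subset of some test; $\alpha(a)=\sum_{x\in a}\alpha(x)$. Events $a,b$ are orthogonal ($a\perp b$) if disjoint with $a\cup b$ an event; complements if $a\perp b$ and $a\cup b$ is a test; perspective ($a\sim b$) if they have a common complement; for outcomes, $x\perp y$ means $\{x\}\perp\{y\}$. A morphism $\phi:A\to B$ is a map $\phi:X(A)\to X(B)$ such that (i) $x\perp y\Rightarrow\phi(x)\perp\phi(y)$; (ii) $\phi(a)$ is an event of $B$ for every event $a$ of $A$; (iii) $a\sim b\Rightarrow\phi(a)\sim\phi(b)$; (iv) for every $\beta\in\Omega(B)$ there are $\alpha\in\Omega(A)$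 and $t\ge0$ with $\beta(\phi(x))=t\alpha(x)$ for all $x\in X(A)$. A morphism is test-preserving if it maps tests to tests, and an embedding if it is test-preserving and injective. *)

(* Defs.v *)
From HB Require Import structures.
From mathcomp Require Import all_boot all_order all_algebra.
From mathcomp Require Import all_classical all_reals all_analysis.
Set Implicit Arguments. Unset Strict Implicit. Unset Printing Implicit Defensive.
Import Order.TTheory GRing.Theory Num.Theory.
Local Open Scope classical_set_scope.
Local Open Scope ring_scope.

Section TestSpaces.
Variable R : realType.

Definition test_space (T : choiceType) (M : set (set T)) : Prop :=
  (forall E, M E -> E !=set0) /\
  (forall E F, M E -> M F -> E `<=` F -> E = F).

Definition event (T : choiceType) (M : set (set T)) (a : set T) : Prop :=
  exists2 E, M E & a `<=` E.

Definition wval (T : choiceType) (alpha : T -> R) (a : set T) : \bar R :=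
  (\esum_(x in a) (alpha x)%:E)%E.

Definition prob_weight (T : choiceType) (M : set (set T)) (alpha : T -> R) : Prop :=
  (forall x, 0 <= alpha x <= 1) /\
  (forall E, M E -> wval alpha E = 1%E).

(* A probabilistic model whose outcome set X(A) is the carrier type T. *)
Record model (T : choiceType) := Model {
  tests : set (set T);
  states : set (T -> R);
  tests_ts : test_space tests;
  tests_cover : \bigcup_(E in tests) E = setT;
  states_pw : forall alpha, states alpha -> prob_weight tests alpha;
  states_convex : forall alpha beta (t : R), states alpha -> states beta ->
     0 <= t <= 1 -> states (fun x => t * alpha x + (1 - t) * beta x);
  states_closed : forall (a : nat -> T -> R) (alpha : T -> R),
     (forall n, states (a n)) ->
     (forall e : R, 0 < e -> exists N : nat, forall n, (N <= n)%N ->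
         forall x, `|a n x - alpha x| < e) ->
     states alpha;
  states_pos : forall x, exists2 alpha, states alpha & 0 < alpha x
}.

Definition orth (T : choiceType) (M : set (set T)) (a b : set T) : Prop :=
  a `&` b = set0 /\ event M (a `|` b).

Definition compl_ev (T : choiceType) (M : set (set T)) (a b : set T) : Prop :=
  orth M a b /\ M (a `|` b).

Definition persp (T : choiceType) (M : set (set T)) (a b : set T) : Prop :=
  exists c, compl_ev M a c /\ compl_ev M b c.

Definition orth_pt (T : choiceType) (M : set (set T)) (x y : T) : Prop :=
  orth M [set x] [set y].

Definition morphism (TA TB : choiceType) (A : model TA) (B : model TB)
    (phi : TA -> TB) : Prop :=
  [/\ (forall x y, orth_pt (tests A) x y -> orth_pt (tests B) (phi x) (phi y)),
      (forall a, event (tests A) a -> event (tests B) (phi @` a)),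
      (forall a b, persp (tests A) a b -> persp (tests B) (phi @` a) (phi @` b)) &
      (forall beta, states B beta ->
          exists alpha, exists2 t : R, states A alpha /\ 0 <= t &
             forall x, beta (phi x) = t * alpha x)].

Definition test_preserving (TA TB : choiceType) (A : model TA) (B : model TB)
    (phi : TA -> TB) : Prop :=
  forall E, tests A E -> tests B (phi @` E).

Definition embedding (TA TB : choiceType) (A : model TA) (B : model TB)
    (phi : TA -> TB) : Prop :=
  [/\ morphism A B phi, test_preserving A B phi & injective phi].

End TestSpaces.

(* Main.v *)
Require Import Defs.
From mathcomp Require Import all_boot all_order all_algebra.
From mathcomp Require Import all_classical all_reals all_analysis.
Local Open Scope classical_set_scope.
Local Open Scope ring_scope.

Import Order.TTheory GRing.Theory Num.Theory.

Lemma esumZ_aux (R : realType) (T : choiceType) (I : set T) (f : T -> \bar R) (r : R) :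
  (0 <= r)%R -> (forall i, (0 <= f i)%E) ->
  (\esum_(i in I) (r%:E * f i) = r%:E * \esum_(i in I) f i)%E.
Proof.
move=> r0 f0; rewrite /esum -ereal_supZl //; last first.
  by apply/set0P; exists 0%E; exists set0; [exact: fsets_set0| rewrite fsbig_set0].
rewrite image_comp; congr ereal_sup; apply: eq_imagel => X _ /=.
by rewrite ge0_mule_fsumr.
Qed.

Theorem lemma1p23 (R : realType) (TA TB : choiceType)
    (A : model R TA) (B : model R TB) (phi : TA -> TB) (psi : TB -> TA) :
  embedding A B phi -> morphism B A psi ->
  (forall x, psi (phi x) = x) ->
  test_preserving B A psi.
Proof.
move=> [[_ _ _ _] phiTP phiInj] [psi1 psi2 _ psi4] hid F HF.
have [E HE sub] : event (tests A) (psi @` F).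
  by apply: psi2; exists F.
have psiinj : set_inj F psi.
  move=> y y' Fy Fy' eq; apply/eqP/negPn/negP => neq.
  have o : orth_pt (tests B) y y'.
    split; first by apply/seteqP; split => // z [/= -> eyy]; move: neq; rewrite eyy eqxx.
    by exists F => // z /= [->|->]; exact/set_mem.
  have [ho1 _] := psi1 _ _ o.
  have : ([set psi y] `&` [set psi y']) (psi y) by rewrite eq.
  by rewrite ho1.
have sum1 : forall alpha, states A alpha -> wval alpha (psi @` F) = 1%E.
  move=> alpha Sa; have [beta [t [Sb t0] ht]] := psi4 _ Sa.
  have [b01 bt] := states_pw Sb.
  have [a01 at_] := states_pw Sa.
  have b0 : forall y, (0 <= (beta y)%:E)%E by move=> y; rewrite lee_fin; case/andP: (b01 y).
  have t1 : t = 1%R.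
    have e1 : (\esum_(y in phi @` E) (alpha (psi y))%:E = 1)%E.
      rewrite esum_image; last by move=> ? ? _ _; exact: phiInj.
      under eq_esum do rewrite hid.
      exact: at_.
    have e2 : (\esum_(y in phi @` E) (alpha (psi y))%:E = t%:E)%E.
      under eq_esum do rewrite ht EFinM.
      by rewrite esumZ_aux // -/(wval beta _) bt ?mule1 //; exact: phiTP.
    by move: e2; rewrite e1 => -[].
  rewrite /wval esum_image //.
  rewrite (eq_esum (b:=fun i => (beta i)%:E)); last by move=> i _; rewrite ht t1 mul1r.
  exact: bt.
suff -> : psi @` F = E by []; apply/seteqP; split => [z /sub //|x Ex]; apply: contrapT => nx.
have [alpha Sa ax] := states_pos A x.
have [a01 at_] := states_pw Sa.
have := at_ _ HE; rewrite /wval (esumID (psi @` F)); last first.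
  by move=> i _; rewrite lee_fin; case/andP: (a01 i).
rewrite (_ : E `&` psi @` F = psi @` F); last by apply/seteqP; split => [z []//|z Fz]; split => //; exact: sub.
rewrite -/(wval alpha _) sum1 //.
have : ((alpha x)%:E <= \esum_(i in E `&` ~` (psi @` F)) (alpha i)%:E)%E.
  apply: esum_ge; exists [set x].
    by split; [exact: finite_set1| move=> z /= ->].
  by rewrite fsbig_set1.
set S := esum _ _ => hx h.
have : (1%:E + (alpha x)%:E <= 1%:E + S)%E by rewrite leeD2l.
rewrite h -EFinD lee_fin => hle.
by move: ax; rewrite ltNge -(lerD2l 1) addr0 hle.
Qed.
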